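(* Let $\psi \subseteq \mathbb{N}$ be an undecidable property of generators, and let $L_0 \subseteq L_1 \subseteq L_2 \subseteq \cdots$ be a countable (but not computably enumerable) sequence of languages, each $L_i \subseteq \mathbb{N}$ decidable, such that (1) every $p \in L_i$ satisfies $\psi(p)$, for each $i$; and (2) $\bigcup_{i \in \mathbb{N}} L_i = \psi$. Then $\lim_{i \to \infty} C(L_i) = \infty$.
   Context: Programs (generators) are identified with natural numbers in a fixed universal programming language. For a decidable set $L_i$, $C(L_i)$ denotes the length of the shortest program deciding $L_i$. *)

(* Defs.v *)
(* A concrete fixed universal programming language:
   counter (Minsky) machines, with programs coded as natural numbers. *)
From Stdlib Require Import Arith List Cantor.
Import ListNotations.

(* Instructions: INC r ; JZDEC r j (if reg r = 0 jump to j, else decrement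
   and continue). *)
Inductive instr : Type :=
| INC : nat -> instr
| JZDEC : nat -> nat -> instr.

Definition decode_instr (a : nat) : instr :=
  if Nat.even a then INC (Nat.div2 a)
  else let '(r, j) := Cantor.of_nat (Nat.div2 a) in JZDEC r j.

(* Decoding of a program code into a list of instructions:
   0 is the empty program, S n codes (instr a :: rest b) with (a,b) = of_nat n.
   Every natural number is a program. *)
Fixpoint decode_aux (fuel n : nat) : list instr :=
  match fuel with
  | 0 => []
  | S f => match n with
           | 0 => []
           | S m => let '(a, b) := Cantor.of_nat m in
                    decode_instr a :: decode_aux f b
           end
  end.

Definition decode (p : nat) : list instr := decode_aux (S p) p.

Definition regs := nat -> nat.
Definition upd (s : regs) (r v : nat) : regs :=
  fun k => if Nat.eqb k r then v else s k.

Fixpoint run (prog : list instr) (fuel pc : nat) (s : regs) : option nat :=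
  match nth_error prog pc with
  | None => Some (s 0)
  | Some i =>
      match fuel with
      | 0 => None
      | S f =>
          match i with
          | INC r => run prog f (S pc) (upd s r (S (s r)))
          | JZDEC r j =>
              match s r with
              | 0 => run prog f j s
              | S v => run prog f (S pc) (upd s r v)
              end
          end
      end
  end.

Definition exec (p x k : nat) : option nat :=
  run (decode p) k 0 (fun r => if Nat.eqb r 0 then x else 0).

Definition halts_with (p x out : nat) : Prop := exists k, exec p x k = Some out.

Definition language := nat -> Prop.

Definition decides (p : nat) (L : language) : Prop :=
  forall x, (L x -> halts_with p x 1) /\ (~ L x -> halts_with p x 0).

Definition decidable_lang (L : language) : Prop := exists p, decides p L.

Definition prog_length (p : nat) : nat := S (Nat.log2 p).

(* C(L) > B : every program deciding L has length greater than B
   (for decidable L this says exactly that the shortest decider has length > B). *)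
Definition C_gt (L : language) (B : nat) : Prop :=
  forall p, decides p L -> B < prog_length p.

Definition ce_sequence (L : nat -> language) : Prop :=
  exists e, forall i, exists q, halts_with e i q /\ decides q (L i).

(* Main.v *)
Require Import Defs.
From Stdlib Require Import Arith Lia Classical.

Lemma pigeon (P : nat -> nat -> Prop) : forall M,
  (forall N, exists i, N <= i /\ exists p, p < M /\ P p i) ->
  exists p, p < M /\ forall N, exists i, N <= i /\ P p i.
Proof.
  induction M as [|M IH]; intros H.
  - destruct (H 0) as [i [_ [p [Hp _]]]]; lia.
  - destruct (classic (forall N, exists i, N <= i /\ P M i)) as [HM|HM].
    + exists M; split; [lia|exact HM].
    + apply not_all_ex_not in HM as [N0 HN0].
      destruct IH as [p [Hp Hq]].
      * intros N. destruct (H (max N N0)) as [i [Hi [p [Hp HP]]]].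
        exists i; split; [lia|]. exists p; split; [|exact HP].
        destruct (Nat.eq_dec p M) as [->|]; [|lia].
        exfalso; apply HN0; exists i; split; [lia|exact HP].
      * exists p; split; [lia|exact Hq].
Qed.

Lemma len_bound p B : prog_length p <= B -> p < 2 ^ B.
Proof.
  unfold prog_length; intros H.
  destruct p as [|p].
  - apply Nat.neq_0_lt_0, Nat.pow_nonzero; lia.
  - apply Nat.log2_lt_pow2; lia.
Qed.

Theorem mainTheorem11 (psi : language) (L : nat -> language)
  (Hpsi : ~ decidable_lang psi)
  (Hmono : forall i x, L i x -> L (S i) x)
  (Hnotce : ~ ce_sequence L)
  (Hdec : forall i, decidable_lang (L i))
  (Hsub : forall i p, L i p -> psi p)
  (Hunion : forall p, psi p -> exists i, L i p) :
  forall B : nat, exists N : nat, forall i : nat, N <= i -> C_gt (L i) B.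
Proof.
  intros B.
  assert (Hm : forall j i x, j <= i -> L j x -> L i x).
  { intros j i x Hji; induction Hji; auto. }
  apply NNPP; intros Hn.
  assert (H : forall N, exists i, N <= i /\ exists p, p < 2 ^ B /\ decides p (L i)).
  { intros N. apply NNPP; intros Hc. apply Hn. exists N. intros i Hi p Hp.
    apply NNPP; intros Hl. apply Hc. exists i; split; [exact Hi|].
    exists p; split; [apply len_bound; lia|exact Hp]. }
  destruct (pigeon _ _ H) as [p [_ Hp]].
  apply Hpsi. exists p. intros x; split.
  - intros Hx. destruct (Hunion x Hx) as [j Hj].
    destruct (Hp j) as [i [Hi Hd]]. apply (proj1 (Hd x)). eapply Hm; eauto.
  - intros Hx. destruct (Hp 0) as [i [_ Hd]]. apply (proj2 (Hd x)).
    intros Hl; apply Hx; eapply Hsub; eauto.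
Qed.
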